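(* Assume $\mathcal W$ and $\mathcal V$ are finite sets. Let $h_\star=\langle f_\star,g_\star\rangle$, $\hat h=\langle\hat f,\hat g\rangle$ with $f_\star,\hat f:\mathcal W\to\mathbb R^p$, $g_\star,\hat g:\mathcal V\to\mathbb R^p$, and let $\mathcal D_{\mathcal W,i}$, $\mathcal D_{\mathcal V,j}$ ($i,j\in\{1,2\}$) be distributions on $\mathcal W$, $\mathcal V$ with $\mathcal D_{i\otimes j}:=\mathcal D_{\mathcal W,i}\otimes\mathcal D_{\mathcal V,j}$. Suppose that for all $(i,j)\ne(2,2)$: $\mathcal R(\hat h;\mathcal D_{i\otimes j})\le\epsilon^2$ and $\mathbb E_{\mathcal D_{i\otimes j}}[h_\star(w,v)^2]\le M_\star^2$, and that $\epsilon<\sigma_\star/2$, where $\sigma_\star^2:=\sigma_p(\mathbb E_{\mathcal D_{\mathcal W,1}}[f_\star f_\star^\top])\,\sigma_p(\mathbb E_{\mathcal D_{\mathcal V,1}}[g_\star g_\star^\top])>0$. Then $\mathcal R(\hat h;\mathcal D_{2\otimes2})\le 64\,\epsilon^2\frac{M_\star^4}{\sigma_\star^4}$.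
   Context: For a scalar predictor $\hat h$ and distribution $\mathcal D$ on $\mathcal W\times\mathcal V$, $\mathcal R(\hat h;\mathcal D):=\mathbb E_{(w,v)\sim\mathcal D}[(h_\star(w,v)-\hat h(w,v))^2]$. $\sigma_p$ denotes the $p$-th largest singular value. *)

(* Defs.v *)
From HB Require Import structures.
From mathcomp Require Import all_boot all_order all_algebra.
From mathcomp Require Import boolp classical_sets reals.
Set Implicit Arguments. Unset Strict Implicit. Unset Printing Implicit Defensive.
Import Order.TTheory GRing.Theory Num.Theory.
Local Open Scope ring_scope.
Local Open Scope classical_set_scope.

Section Defs.
Variable R : realType.

Definition is_distr (T : finType) (D : T -> R) : Prop :=
  (forall x, 0 <= D x) /\ \sum_(x : T) D x = 1.

Definition expect (T : finType) (D : T -> R) (F : T -> R) : R :=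
  \sum_(x : T) D x * F x.

Definition expect_mx (T : finType) (p : nat) (D : T -> R) (F : T -> 'M[R]_p)
  : 'M[R]_p := \sum_(x : T) D x *: F x.

Definition second_moment (T : finType) (p : nat) (D : T -> R)
  (f : T -> 'cV[R]_p) : 'M[R]_p := expect_mx D (fun x => f x *m (f x)^T).

Definition bilin (W V : finType) (p : nat) (f : W -> 'cV[R]_p)
  (g : V -> 'cV[R]_p) (w : W) (v : V) : R :=
  \sum_(k < p) f w k 0 * g v k 0.

Definition expect_prod (W V : finType) (DW : W -> R) (DV : V -> R)
  (F : W -> V -> R) : R :=
  \sum_(w : W) \sum_(v : V) DW w * DV v * F w v.

Definition risk (W V : finType) (DW : W -> R) (DV : V -> R)
  (hstar hhat : W -> V -> R) : R :=
  expect_prod DW DV (fun w v => (hstar w v - hhat w v) ^+ 2).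

Definition singular_values (p : nat) (A : 'M[R]_p) : set R :=
  [set s | 0 <= s /\ root (char_poly (A^T *m A)) (s ^+ 2)].

(* sigma_p(A) for a p x p matrix A: the p-th largest singular value, i.e.
   the smallest one. *)
Definition sigma_last (p : nat) (A : 'M[R]_p) : R :=
  inf (singular_values A).

End Defs.

(* Main.v *)
Require Import Defs.
From HB Require Import structures.
From mathcomp Require Import all_boot all_order all_algebra.
From mathcomp Require Import boolp classical_sets functions reals.
From mathcomp Require Import topology normedtype derive matrix_normedtype.
From mathcomp Require Import ring lra.
Set Implicit Arguments. Unset Strict Implicit. Unset Printing Implicit Defensive.
Import Order.TTheory GRing.Theory Num.Theory.
Import numFieldNormedType.Exports.
Local Open Scope ring_scope.

Section LA.
Variable R : realType.

Lemma wCS (I : finType) (D a b : I -> R) : (forall i, 0 <= D i) ->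
  (\sum_i D i * a i * b i) ^+ 2 <= (\sum_i D i * a i ^+ 2) * (\sum_i D i * b i ^+ 2).
Proof.
move=> D0.
set A := \sum_i D i * a i ^+ 2; set B := \sum_i D i * b i ^+ 2.
set C := \sum_i D i * a i * b i.
have A0 : 0 <= A by apply: sumr_ge0 => i _; rewrite mulr_ge0 ?sqr_ge0.
have B0 : 0 <= B by apply: sumr_ge0 => i _; rewrite mulr_ge0 ?sqr_ge0.
have H : 0 <= \sum_i D i * (C * a i - A * b i) ^+ 2.
  by apply: sumr_ge0 => i _; rewrite mulr_ge0 ?sqr_ge0.
have E : \sum_i D i * (C * a i - A * b i) ^+ 2 = A * (A * B - C ^+ 2).
  rewrite (eq_bigr (fun i => C ^+ 2 * (D i * a i ^+ 2) - (2 * C * A) * (D i * a i * b i)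
     + A ^+ 2 * (D i * b i ^+ 2))); last by move=> i _; ring.
  rewrite big_split /= sumrB -!mulr_sumr -/A -/B -/C; ring.
rewrite E in H.
have [Apos|] := ltP 0 A.
  by rewrite -subr_ge0; rewrite pmulr_rge0 in H.
move=> Ale0; have A00 : A = 0 by apply/le_anti; rewrite Ale0 A0.
have Di : forall i, D i * a i ^+ 2 = 0.
  move=> i; move/eqP: A00; rewrite /A psumr_eq0; last by move=> j _; rewrite mulr_ge0 ?sqr_ge0.
  by move/allP/(_ i (mem_index_enum _)) => /implyP /(_ isT) /eqP.
have -> : C = 0.
  rewrite /C big1 // => i _; have := Di i; move/eqP; rewrite mulf_eq0 sqrf_eq0.
  by case/orP => /eqP ->; rewrite ?mul0r ?mulr0 ?mul0r.
by rewrite expr0n /= mulr_ge0.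
Qed.

Variable p : nat.
Implicit Types x y z : 'cV[R]_p.

Definition dot x y : R := (x^T *m y) 0 0.
Lemma dotE x y : dot x y = \sum_k x k 0 * y k 0.
Proof. by rewrite /dot !mxE; apply: eq_bigr => k _; rewrite !mxE. Qed.
Lemma dotC x y : dot x y = dot y x.
Proof. by rewrite !dotE; apply: eq_bigr => k _; rewrite mulrC. Qed.
Lemma dotDr x y z : dot x (y + z) = dot x y + dot x z.
Proof. by rewrite /dot mulmxDr mxE. Qed.
Lemma dotBr x y z : dot x (y - z) = dot x y - dot x z.
Proof. by rewrite /dot mulmxBr !mxE. Qed.
Lemma dotZr x y (k : R) : dot x (k *: y) = k * dot x y.
Proof. by rewrite /dot -scalemxAr mxE. Qed.
Lemma dotDl x y z : dot (y + z) x = dot y x + dot z x.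
Proof. by rewrite dotC dotDr !(dotC x). Qed.
Lemma dotBl x y z : dot (y - z) x = dot y x - dot z x.
Proof. by rewrite dotC dotBr !(dotC x). Qed.
Lemma dotZl x y (k : R) : dot (k *: y) x = k * dot y x.
Proof. by rewrite dotC dotZr dotC. Qed.
Lemma dot_sumr (I : finType) x (F : I -> 'cV[R]_p) :
  dot x (\sum_i F i) = \sum_i dot x (F i).
Proof. by rewrite /dot mulmx_sumr summxE. Qed.
Lemma dot_suml (I : finType) x (F : I -> 'cV[R]_p) :
  dot (\sum_i F i) x = \sum_i dot (F i) x.
Proof. by rewrite dotC dot_sumr; apply: eq_bigr => i _; rewrite dotC. Qed.
Lemma dot_mulmx x (A : 'M[R]_p) y : dot x (A *m y) = dot (A^T *m x) y.
Proof. by rewrite /dot trmx_mul trmxK mulmxA. Qed.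
Lemma dot_ge0 x : 0 <= dot x x.
Proof. by rewrite dotE; apply: sumr_ge0 => k _; rewrite -expr2 sqr_ge0. Qed.
Lemma dot_eq0 x : dot x x = 0 -> x = 0.
Proof.
rewrite dotE => /eqP; rewrite psumr_eq0; last by move=> k _; rewrite -expr2 sqr_ge0.
move/allP => H; apply/matrixP => i j; rewrite (ord1 j) mxE.
by have /implyP /(_ isT) := H i (mem_index_enum _); rewrite -expr2 sqrf_eq0 => /eqP.
Qed.
Lemma CS x y : dot x y ^+ 2 <= dot x x * dot y y.
Proof.
have := @wCS _ (fun=> 1) (fun k => x k 0) (fun k => y k 0) (fun=> ler01).
by rewrite !dotE; under eq_bigr do rewrite mul1r; under [X in _ <= X * _]eq_bigr do rewrite mul1r expr2;
  under [X in _ <= _ * X]eq_bigr do rewrite mul1r expr2.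
Qed.
Lemma dot0r x : dot x 0 = 0.
Proof. by rewrite dotE big1 // => k _; rewrite mxE mulr0. Qed.
Lemma mx11_dot x y : x^T *m y = (dot x y)%:M.
Proof. by rewrite {1}[x^T *m y]mx11_scalar. Qed.
Lemma outer_mul x y z : x *m y^T *m z = dot y z *: x.
Proof. by rewrite -mulmxA mx11_dot mul_mx_scalar. Qed.
Lemma outer_outer x y z (t : 'cV[R]_p) : (x *m y^T) *m (z *m t^T) = dot y z *: (x *m t^T).
Proof. by rewrite mulmxA outer_mul scalemxAl. Qed.

Lemma sm_qf (T : finType) (D : T -> R) (f : T -> 'cV[R]_p) x :
  dot x (second_moment D f *m x) = \sum_t D t * dot (f t) x ^+ 2.
Proof.
rewrite /second_moment /expect_mx mulmx_suml dot_sumr; apply: eq_bigr => t _.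
by rewrite -scalemxAl dotZr outer_mul dotZr dotC expr2.
Qed.
Lemma sm_tr (T : finType) (D : T -> R) (f : T -> 'cV[R]_p) :
  (second_moment D f)^T = second_moment D f.
Proof.
rewrite /second_moment /expect_mx raddf_sum; apply: eq_bigr => t _.
by apply/matrixP => i j; rewrite !mxE; congr (_ * _); apply: eq_bigr => k _; rewrite !mxE mulrC.
Qed.
Lemma sm_ge0 (T : finType) (D : T -> R) (f : T -> 'cV[R]_p) x :
  (forall t, 0 <= D t) -> 0 <= dot x (second_moment D f *m x).
Proof. by move=> D0; rewrite sm_qf; apply: sumr_ge0 => t _; rewrite mulr_ge0 ?sqr_ge0. Qed.

Lemma inj_unit (A : 'M[R]_p) : (forall x, A *m x = 0 -> x = 0) -> A \in unitmx.
Proof.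
move=> Ainj; rewrite -unitmx_tr unitmxE unitfE; apply/negP => /det0P [v v0 vA].
have : A *m v^T = 0 by rewrite -(trmxK A) -trmx_mul vA trmx0.
by move/Ainj/(congr1 trmx); rewrite trmxK trmx0 => /eqP; rewrite (negbTE v0).
Qed.

Lemma qf_unit (A : 'M[R]_p) s : 0 < s -> (forall x, s * dot x x <= dot x (A *m x)) ->
  A \in unitmx.
Proof.
move=> s0 H; apply: inj_unit => x Ax; apply: dot_eq0; apply/le_anti.
rewrite dot_ge0 andbT; have := H x; rewrite Ax dot0r => Hx.
by rewrite -(pmulr_rle0 _ s0).
Qed.
Lemma canc (a b : R) : 0 <= a -> 0 <= b -> a * a <= b * a -> a <= b.
Proof. move=> a0 b0 H; nra. Qed.

Lemma vCS (I : finType) (D e : I -> R) (g : I -> 'cV[R]_p) : (forall i, 0 <= D i) ->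
  dot (\sum_i (D i * e i) *: g i) (\sum_i (D i * e i) *: g i)
   <= (\sum_i D i * e i ^+ 2) * (\sum_i D i * dot (g i) (g i)).
Proof.
move=> D0; set s := \sum_i _.
have E : dot s s = \sum_i D i * e i * dot (g i) s.
  by rewrite {1}/s dot_suml; apply: eq_bigr => i _; rewrite dotZl.
have H1 := @wCS _ D e (fun i => dot (g i) s) D0.
have H2 : \sum_i D i * dot (g i) s ^+ 2 <= (\sum_i D i * dot (g i) (g i)) * dot s s.
  rewrite mulr_suml; apply: ler_sum => i _; rewrite -mulrA ler_wpM2l //; exact: CS.
rewrite -E in H1.
have A0 : 0 <= \sum_i D i * e i ^+ 2 by apply: sumr_ge0 => i _; rewrite mulr_ge0 ?sqr_ge0.
have B0 : 0 <= \sum_i D i * dot (g i) (g i) by apply: sumr_ge0 => i _; rewrite mulr_ge0 ?dot_ge0.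
apply: canc; rewrite ?dot_ge0 ?mulr_ge0 //.
apply: (le_trans (y := dot s s ^+ 2)); first by rewrite expr2.
apply: le_trans H1 _; rewrite -mulrA; exact: ler_wpM2l.
Qed.

Lemma inv_bound (A : 'M[R]_p) s y : 0 < s -> A \in unitmx ->
  (forall x, s * dot x x <= dot x (A *m x)) ->
  s * dot (invmx A *m y) y <= dot y y /\
  s ^+ 2 * dot (invmx A *m y) (invmx A *m y) <= dot y y.
Proof.
move=> s0 Au H; set t := invmx A *m y.
have At : A *m t = y by rewrite /t mulKVmx.
have h1 := H t; rewrite At in h1.
have h2 := CS t y.
have t0 := dot_ge0 t; have y0 := dot_ge0 y.
have a0 : 0 <= dot t y by apply: le_trans h1; rewrite mulr_ge0 // ltW.
have h3 : s * dot t y <= dot y y.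
  have [->|apos] := eqVneq (dot t y) 0; first by rewrite mulr0.
  have apos' : 0 < dot t y by rewrite lt0r apos.
  rewrite -(ler_pM2r apos'); nra.
split => //; rewrite expr2 -mulrA; apply: le_trans h3; rewrite ler_pM2l //.
Qed.
Lemma eqle (a b : R) : a = b -> a <= b.
Proof. by move->. Qed.
Lemma lemid (m a b : R) : a <= m -> m <= b -> a <= b.
Proof. exact: le_trans. Qed.
Lemma Bbound (Sf Sg E0 : 'M[R]_p) (sf sg e2 : R) :
  0 < sf -> 0 < sg -> 0 <= e2 -> 4 * e2 <= sf * sg ->
  Sf^T = Sf -> Sf \in unitmx ->
  (forall x, sf * dot x x <= dot x (Sf *m x)) ->
  (forall x, sg * dot x x <= dot x (Sg *m x)) ->
  (forall x y, dot x (E0 *m y) ^+ 2 <= e2 * dot x (Sf *m x) * dot y (Sg *m y)) ->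
  forall x, 
  sg ^+ 2 * dot x x <= 4 * dot ((Sg - invmx Sf *m E0) *m x) ((Sg - invmx Sf *m E0) *m x) /\
  sf * sg * dot (invmx Sf *m E0 *m x) (invmx Sf *m E0 *m x)
    <= 4 * e2 * dot ((Sg - invmx Sf *m E0) *m x) ((Sg - invmx Sf *m E0) *m x).
Proof.
move=> sf0 sg0 e0 hse Sfs Su hSf hSg hE x.
set Bx := (Sg - invmx Sf *m E0) *m x.
set Q := dot x (Sg *m x); set v := invmx Sf *m E0 *m x.
have hQ : sg * dot x x <= Q by apply: hSg.
have x0 := dot_ge0 x; have v0 := dot_ge0 v; have B0 := dot_ge0 Bx.
have Q0 : 0 <= Q by apply: le_trans hQ; rewrite mulr_ge0 // ltW.
have step1 : forall y, sf * dot y v ^+ 2 <= e2 * dot y y * Q.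
  move=> y; have [i1 _] := @inv_bound Sf sf y sf0 Su hSf.
  set t := invmx Sf *m y.
  have -> : dot y v = dot t (E0 *m x).
    by rewrite /v -mulmxA [LHS]dot_mulmx trmx_inv Sfs.
  have := hE t x; rewrite /t mulKVmx // -/t -/Q => h.
  have t0 : 0 <= dot t y.
    have := hSf t; rewrite /t mulKVmx // -/t => ht; apply: le_trans ht; apply: mulr_ge0; [exact: ltW | exact: dot_ge0].
  have y0 := dot_ge0 y.
  apply: (@lemid (sf * (e2 * dot t y * Q))); first by rewrite ler_wpM2l // ltW.
  have : e2 * Q * (sf * dot t y) <= e2 * Q * dot y y by rewrite ler_wpM2l ?mulr_ge0.
  by move=> hh; apply: (@lemid (e2 * Q * (sf * dot t y))); [apply: eqle; ring | apply: le_trans hh _; apply: eqle; ring].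
have step2 : sf * dot v v <= e2 * Q.
  have h := step1 v.
  have [vz|vpos] := eqVneq (dot v v) 0; first by rewrite vz mulr0 mulr_ge0.
  have vp : 0 < dot v v by rewrite lt0r vpos v0.
  rewrite -(ler_pM2r vp); nra.
have step3 : 2 * dot x v <= Q.
  have h := CS x v.
  have h4 : sf * sg * dot x v ^+ 2 <= e2 * Q ^+ 2.
    apply: (@lemid (sf * sg * (dot x x * dot v v))); first by rewrite ler_wpM2l // mulr_ge0 // ltW.
    have : (sg * dot x x) * (sf * dot v v) <= Q * (e2 * Q) by apply: ler_pM => //; rewrite mulr_ge0 // ltW.
    move=> hh; apply: (@lemid ((sg * dot x x) * (sf * dot v v))); first by apply: eqle; ring.
    apply: le_trans hh _; apply: eqle; rewrite expr2; ring.
  have h5 : sf * sg * (4 * dot x v ^+ 2) <= sf * sg * Q ^+ 2.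
    have : 4 * e2 * Q ^+ 2 <= sf * sg * Q ^+ 2 by rewrite ler_wpM2r ?sqr_ge0.
    nra.
  have sfsg : 0 < sf * sg by rewrite mulr_gt0.
  rewrite ler_pM2l // in h5.
  nra.
have step4 : sg * Q <= 4 * dot Bx Bx.
  have hxB : dot x Bx = Q - dot x v by rewrite /Bx mulmxBl dotBr.
  have h := CS x Bx; rewrite hxB in h.
  have h6 : Q ^+ 2 <= 4 * (dot x x * dot Bx Bx) by nra.
  have h7 : sg * Q ^+ 2 <= 4 * Q * dot Bx Bx.
    apply: (@lemid (sg * (4 * (dot x x * dot Bx Bx)))); first by rewrite ler_wpM2l // ltW.
    have : (sg * dot x x) * (4 * dot Bx Bx) <= Q * (4 * dot Bx Bx) by rewrite ler_wpM2r ?mulr_ge0.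
    move=> hh; apply: (@lemid ((sg * dot x x) * (4 * dot Bx Bx))); first by apply: eqle; ring.
    apply: le_trans hh _; apply: eqle; ring.
  have [Qz|Qpos] := eqVneq Q 0; first by rewrite Qz mulr0 mulr_ge0.
  have Qp : 0 < Q by rewrite lt0r Qpos Q0.
  rewrite -(ler_pM2r Qp); nra.
split.
  apply: le_trans step4; rewrite expr2 -mulrA; apply: ler_wpM2l => //; exact: ltW.
apply: (@lemid (sg * (e2 * Q))).
  by rewrite (mulrC sf) -mulrA ler_wpM2l // ltW.
have : e2 * (sg * Q) <= e2 * (4 * dot Bx Bx) by rewrite ler_wpM2l.
by move=> hh; apply: (@lemid (e2 * (sg * Q))); [apply: eqle; ring | apply: le_trans hh _; apply: eqle; ring].
Qed.
Lemma sub_bound x z : dot (x - z) (x - z) <= 3/2 * dot x x + 3 * dot z z.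
Proof.
have h := dot_ge0 (x + 2%:R *: z).
rewrite !dotDl !dotDr !dotZl !dotZr in h.
rewrite !dotBl !dotBr (dotC z x) in h *; lra.
Qed.
End LA.

Section Ar.
Variable R : realType.


Lemma chain (a b c d : R) : a = b -> b <= c -> c = d -> a <= d.
Proof. by move=> -> h <-. Qed.
Lemma eqle_ (a b : R) : a = b -> a <= b.
Proof. by move->. Qed.
Lemma mid (m a b : R) : a <= m -> m <= b -> a <= b.
Proof. exact: le_trans. Qed.

Lemma pw (sf sg e2 : R) (F Dd Ey Yy A Y' G Cc del t1 t2 t3 : R) :
  0 < sf -> 0 < sg -> 0 <= e2 -> 0 <= F -> 0 <= Dd -> 0 <= Ey -> 0 <= Yy ->
  0 <= A -> 0 <= Y' -> 0 <= G -> 0 <= Cc ->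
  del = t1 - t2 + t3 -> t1 ^+ 2 <= F * Dd -> t2 ^+ 2 <= F * Ey -> t3 ^+ 2 <= A * Yy ->
  sf ^+ 2 * Dd <= Cc -> sf * sg * Ey <= 4 * e2 * Y' -> sg ^+ 2 * Yy <= 4 * Y' ->
  Y' <= 3/2 * G + 3 * Dd ->
  del ^+ 2 * (sf ^+ 3 * sg ^+ 2) <= 3 * sf * sg ^+ 2 * F * Cc
     + 12 * e2 * sg * F * (3/2 * sf ^+ 2 * G + 3 * Cc)
     + 12 * sf * A * (3/2 * sf ^+ 2 * G + 3 * Cc).
Proof.
move=> sf0 sg0 e0 F0 D0 E0 Y0 A0 Y'0 G0 C0 hd h1 h2 h3 hD hE hY hY'.
have h0 : (t1 - t2 + t3) ^+ 2 <= 3 * (t1 ^+ 2 + t2 ^+ 2 + t3 ^+ 2).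
  have : 0 <= (t1 + t2) ^+ 2 + (t1 - t3) ^+ 2 + (t2 + t3) ^+ 2 by rewrite !addr_ge0 ?sqr_ge0.
  by move=> hh; rewrite -subr_ge0; apply: le_trans hh _; apply: eqle_; ring.
have h : del ^+ 2 <= 3 * (F * Dd + F * Ey + A * Yy) by rewrite hd; lra.
have sf3 : 0 <= sf ^+ 3 * sg ^+ 2 by rewrite mulr_ge0 // exprn_ge0 // ltW.
have hY2 : sf ^+ 2 * Y' <= 3/2 * sf ^+ 2 * G + 3 * Cc.
  have : sf ^+ 2 * Y' <= sf ^+ 2 * (3/2 * G + 3 * Dd) by rewrite ler_wpM2l // sqr_ge0.
  move=> hh; apply: le_trans hh _; nra.
set Yb := 3/2 * sf ^+ 2 * G + 3 * Cc.
apply: (@mid (3 * (F * Dd + F * Ey + A * Yy) * (sf ^+ 3 * sg ^+ 2))).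
  by rewrite ler_wpM2r.
have k1 : F * Dd * (sf ^+ 3 * sg ^+ 2) <= sf * sg ^+ 2 * F * Cc.
  have : F * (sf * sg ^+ 2) * (sf ^+ 2 * Dd) <= F * (sf * sg ^+ 2) * Cc.
    by rewrite ler_wpM2l // !mulr_ge0 // ?sqr_ge0 // ltW.
  by move=> hh; apply: (chain _ hh); ring.
have k2 : F * Ey * (sf ^+ 3 * sg ^+ 2) <= 4 * e2 * sg * F * Yb.
  have : F * (sf ^+ 2 * sg) * (sf * sg * Ey) <= F * (sf ^+ 2 * sg) * (4 * e2 * Y').
    by rewrite ler_wpM2l // !mulr_ge0 // ?sqr_ge0 // ltW.
  move=> hh; apply: (mid (le_trans (eqle_ _) hh)); first by ring.
  have : (4 * e2 * sg * F) * (sf ^+ 2 * Y') <= (4 * e2 * sg * F) * Yb.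
    by rewrite ler_wpM2l // !mulr_ge0 // ltW.
  by move=> hh2; apply: (chain _ hh2); ring.
have k3 : A * Yy * (sf ^+ 3 * sg ^+ 2) <= 4 * sf * A * Yb.
  have : A * sf ^+ 3 * (sg ^+ 2 * Yy) <= A * sf ^+ 3 * (4 * Y').
    by rewrite ler_wpM2l // !mulr_ge0 // ?exprn_ge0 // ltW.
  move=> hh; apply: (mid (le_trans (eqle_ _) hh)); first by ring.
  have : (4 * sf * A) * (sf ^+ 2 * Y') <= (4 * sf * A) * Yb.
    by rewrite ler_wpM2l // !mulr_ge0 // ltW.
  by move=> hh2; apply: (chain _ hh2); ring.
lra.
Qed.

Lemma final_arith (sf sg e2 m : R) (X U1 An Cn Z Z1 : R) :
  0 < sf -> 0 < sg -> 0 <= e2 -> 4 * e2 <= sf * sg -> 0 <= m ->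
  0 <= X -> 0 <= U1 -> 0 <= An -> 0 <= Cn -> 0 <= Z -> 0 <= Z1 ->
  sg * X <= m -> sg * U1 <= m -> sf * Z <= m -> sf * Z1 <= m ->
  Cn <= e2 * U1 -> An <= e2 * Z1 ->
  3 * sf * sg ^+ 2 * X * Cn + 12 * e2 * sg * X * (3/2 * sf ^+ 2 * Z + 3 * Cn)
   + 12 * sf * An * (3/2 * sf ^+ 2 * Z + 3 * Cn) <= 57 * e2 * m ^+ 2 * sf.
Proof.
move=> sf0 sg0 e0 hse m0 X0 U0 A0 C0 Z0 Z10 hX hU hZ hZ1 hC hA.
set Yb := 3/2 * sf ^+ 2 * Z + 3 * Cn.
have hCn : sg * Cn <= e2 * m.
  apply: (@mid (e2 * (sg * U1))); last by rewrite ler_wpM2l.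
  have : sg * Cn <= sg * (e2 * U1) by rewrite ler_wpM2l // ltW.
  by move=> hh; apply: (chain _ hh); ring.
have hYb : Yb <= 9/4 * sf * m.
  have a1 : 3/2 * sf ^+ 2 * Z <= 3/2 * sf * m.
    have : (3/2 * sf) * (sf * Z) <= (3/2 * sf) * m by rewrite ler_wpM2l //; lra.
    by move=> hh; apply: (chain _ hh); ring.
  have a2 : 4 * Cn <= sf * m.
    have : 4 * Cn <= 4 * (e2 * U1) by rewrite ler_wpM2l.
    move=> hh; apply: le_trans hh _.
    have : (4 * e2) * U1 <= (sf * sg) * U1 by rewrite ler_wpM2r.
    move=> hh; apply: (mid (le_trans (eqle_ _) hh)); first by ring.
    have : sf * (sg * U1) <= sf * m by rewrite ler_wpM2l // ltW.
    by move=> hh2; apply: (chain _ hh2); ring.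
  rewrite /Yb; lra.
have Yb0 : 0 <= Yb by rewrite /Yb; have := sqr_ge0 sf; nra.
have sX : 0 <= sg * X by rewrite mulr_ge0 // ltW.
have sC : 0 <= sg * Cn by rewrite mulr_ge0 // ltW.
have t1 : 3 * sf * sg ^+ 2 * X * Cn <= 3 * e2 * m ^+ 2 * sf.
  have p1 : (sg * X) * (sg * Cn) <= m * (e2 * m) by apply: ler_pM.
  have : (3 * sf) * ((sg * X) * (sg * Cn)) <= (3 * sf) * (m * (e2 * m)).
    by rewrite ler_wpM2l //; lra.
  by move=> hh; apply: (chain _ hh); ring.
have t2 : 12 * e2 * sg * X * Yb <= 27 * e2 * m ^+ 2 * sf.
  have p1 : (sg * X) * Yb <= m * (9/4 * sf * m) by apply: ler_pM.
  have : (12 * e2) * ((sg * X) * Yb) <= (12 * e2) * (m * (9/4 * sf * m)).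
    by rewrite ler_wpM2l //; lra.
  by move=> hh; apply: (chain _ hh); field.
have t3 : 12 * sf * An * Yb <= 27 * e2 * m ^+ 2 * sf.
  have hAn : sf * An <= e2 * m.
    have : sf * An <= sf * (e2 * Z1) by rewrite ler_wpM2l // ltW.
    move=> hh; apply: le_trans hh _.
    have : e2 * (sf * Z1) <= e2 * m by rewrite ler_wpM2l.
    by move=> hh2; apply: (chain _ hh2); ring.
  have p1 : (sf * An) * Yb <= (e2 * m) * (9/4 * sf * m) by apply: ler_pM => //; rewrite mulr_ge0 // ltW.
  have : 12 * ((sf * An) * Yb) <= 12 * ((e2 * m) * (9/4 * sf * m)) by rewrite ler_wpM2l.
  by move=> hh; apply: (chain _ hh); field.
lra.
Qed.
End Ar.

Section Main.
Variables (R : realType) (W V : finType) (p : nat).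
Variables (fs fh : W -> 'cV[R]_p) (gs gh : V -> 'cV[R]_p).
Variables (DW1 DW2 : W -> R) (DV1 DV2 : V -> R).

Let hs w v := dot (fs w) (gs v).
Let hh w v := dot (fh w) (gh v).
Let del w v := hs w v - hh w v.
Let Sf := second_moment DW1 fs.
Let Sg := second_moment DV1 gs.
Let E0 := \sum_w \sum_v (DW1 w * DV1 v * del w v) *: (fs w *m (gs v)^T).
Let K := \sum_w DW1 w *: (fs w *m (fh w)^T).
Let C := \sum_v DV1 v *: (gh v *m (gs v)^T).
Let a w := \sum_v (DV1 v * del w v) *: gs v.
Let c v := \sum_w (DW1 w * del w v) *: fs w.

Lemma A1 : K *m C = Sf *m Sg - E0.
Proof.
have -> : Sf *m Sg = \sum_w \sum_v (DW1 w * DV1 v * hs w v) *: (fs w *m (gs v)^T).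
  rewrite /Sf /Sg /second_moment /expect_mx mulmx_suml; apply: eq_bigr => w _.
  rewrite mulmx_sumr; apply: eq_bigr => v _.
  by rewrite -scalemxAl -scalemxAr scalerA outer_outer scalerA.
have -> : K *m C = \sum_w \sum_v (DW1 w * DV1 v * hh w v) *: (fs w *m (gs v)^T).
  rewrite /K /C mulmx_suml; apply: eq_bigr => w _.
  rewrite mulmx_sumr; apply: eq_bigr => v _.
  by rewrite -scalemxAl -scalemxAr scalerA outer_outer scalerA.
rewrite /E0 -sumrB; apply: eq_bigr => w _; rewrite -sumrB; apply: eq_bigr => v _.
by rewrite -scalerBl /del; congr (_ *: _); ring.
Qed.

Lemma A2 v : K *m gh v = Sf *m gs v - c v.
Proof.
rewrite /K /Sf /second_moment /expect_mx /c !mulmx_suml -sumrB; apply: eq_bigr => w _.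
rewrite -!scalemxAl !outer_mul !scalerA -scalerBl /del /hs /hh; congr (_ *: _).
by rewrite (dotC (fs w)); ring.
Qed.

Lemma A3 w y : dot (fh w) (C *m y) = dot (Sg *m fs w - a w) y.
Proof.
rewrite /C /Sg /second_moment /expect_mx /a mulmx_suml dot_sumr mulmx_suml dotBl dot_suml dot_suml.
rewrite -sumrB; apply: eq_bigr => v _.
rewrite -!scalemxAl !outer_mul !dotZr !dotZl /del /hs /hh.
rewrite (dotC (gs v) (fs w)); ring.
Qed.

Lemma E0form x y : dot x (E0 *m y) =
  \sum_w DW1 w * dot x (fs w) * (\sum_v DV1 v * del w v * dot (gs v) y).
Proof.
rewrite /E0 mulmx_suml dot_sumr; apply: eq_bigr => w _.
rewrite mulmx_suml dot_sumr mulr_sumr; apply: eq_bigr => v _.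
by rewrite -scalemxAl outer_mul dotZr dotZr; ring.
Qed.

Lemma E0bound x y : (forall w, 0 <= DW1 w) -> (forall v, 0 <= DV1 v) ->
  dot x (E0 *m y) ^+ 2 <= (\sum_w \sum_v DW1 w * DV1 v * del w v ^+ 2)
     * dot x (Sf *m x) * dot y (Sg *m y).
Proof.
move=> DW0 DV0; rewrite E0form.
set b := fun w => \sum_v DV1 v * del w v * dot (gs v) y.
apply: le_trans (wCS _ _ DW0) _.
have -> : \sum_w DW1 w * dot x (fs w) ^+ 2 = dot x (Sf *m x).
  by rewrite /Sf sm_qf; apply: eq_bigr => w _; rewrite dotC.
apply: (@lemid _ (dot x (Sf *m x) * ((\sum_w \sum_v DW1 w * DV1 v * del w v ^+ 2) * dot y (Sg *m y)))); last by apply: eqle; ring.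
have Sx : 0 <= dot x (Sf *m x) by exact: sm_ge0.
rewrite ler_wpM2l //.
have hb : forall w, b w ^+ 2 <= (\sum_v DV1 v * del w v ^+ 2) * dot y (Sg *m y).
  move=> w; have -> : dot y (Sg *m y) = \sum_v DV1 v * dot (gs v) y ^+ 2.
    by rewrite /Sg sm_qf.
  exact: wCS.
rewrite mulr_suml; apply: ler_sum => w _.
apply: (@lemid _ (DW1 w * ((\sum_v DV1 v * del w v ^+ 2) * dot y (Sg *m y)))).
  by rewrite ler_wpM2l //; exact: hb.
apply: eqle; rewrite mulrA mulr_sumr; congr (_ * _); apply: eq_bigr => v _; ring.
Qed.
Lemma decomp v w : Sf \in unitmx -> (Sg - invmx Sf *m E0) \in unitmx ->
  let y := invmx (Sg - invmx Sf *m E0) *m (gs v - invmx Sf *m c v) in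
  del w v = dot (fs w) (invmx Sf *m c v) - dot (fs w) (invmx Sf *m E0 *m y)
            + dot (a w) y.
Proof.
move=> Su Bu; set B := Sg - invmx Sf *m E0 => y.
have By : B *m y = gs v - invmx Sf *m c v by rewrite /y mulKVmx.
have SB : Sf *m B = K *m C by rewrite A1 /B mulmxBr mulmxA mulmxV // mul1mx.
have Ku : K \in unitmx.
  have : (K *m C) \in unitmx by rewrite -SB unitmx_mul Su Bu.
  by rewrite unitmx_mul => /andP[].
have Cy : C *m y = gh v.
  have : K *m (C *m y) = K *m gh v.
    by rewrite mulmxA -SB -mulmxA By mulmxBr mulmxA mulmxV // mul1mx A2.
  by move/(congr1 (mulmx (invmx K))); rewrite !mulKmx.
have Sgy : dot (Sg *m fs w) y = dot (fs w) (Sg *m y).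
  by rewrite [RHS]dot_mulmx /Sg sm_tr.
have Sgy2 : Sg *m y = B *m y + invmx Sf *m E0 *m y by rewrite /B mulmxBl subrK.
rewrite /del /hh -Cy A3 dotBl Sgy Sgy2 By dotDr dotBr /hs; ring.
Qed.
Lemma sum_sep3 (k1 k2 k3 : R) (DW : W -> R) (DV : V -> R) (F A : W -> R) (Cc Y : V -> R) :
  \sum_w \sum_v DW w * DV v * (k1 * F w * Cc v + k2 * F w * Y v + k3 * A w * Y v)
  = k1 * ((\sum_w DW w * F w) * (\sum_v DV v * Cc v))
    + k2 * ((\sum_w DW w * F w) * (\sum_v DV v * Y v))
    + k3 * ((\sum_w DW w * A w) * (\sum_v DV v * Y v)).
Proof.
rewrite !big_distrlr /= !mulr_sumr -!big_split /=; apply: eq_bigr => w _.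
rewrite !mulr_sumr -!big_split /=; apply: eq_bigr => v _; ring.
Qed.

Lemma main_core (sf sg e2 m : R) :
  (forall w, 0 <= DW1 w) -> (forall w, 0 <= DW2 w) ->
  (forall v, 0 <= DV1 v) -> (forall v, 0 <= DV2 v) ->
  0 < sf -> 0 < sg -> 0 <= e2 -> 4 * e2 <= sf * sg -> 0 <= m ->
  (forall x, sf * dot x x <= dot x (Sf *m x)) ->
  (forall x, sg * dot x x <= dot x (Sg *m x)) ->
  \sum_w \sum_v DW1 w * DV1 v * del w v ^+ 2 <= e2 ->
  \sum_w \sum_v DW1 w * DV2 v * del w v ^+ 2 <= e2 ->
  \sum_w \sum_v DW2 w * DV1 v * del w v ^+ 2 <= e2 ->
  \sum_w \sum_v DW1 w * DV1 v * hs w v ^+ 2 <= m ->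
  \sum_w \sum_v DW1 w * DV2 v * hs w v ^+ 2 <= m ->
  \sum_w \sum_v DW2 w * DV1 v * hs w v ^+ 2 <= m ->
  (\sum_w \sum_v DW2 w * DV2 v * del w v ^+ 2) * (sf ^+ 3 * sg ^+ 2)
    <= 57 * e2 * m ^+ 2 * sf.
Proof.
move=> DW10 DW20 DV10 DV20 sf0 sg0 e0 hse m0 hSf hSg r11 r12 r21 M11 M12 M21.
have Su := qf_unit sf0 hSf.
have Sfs : Sf^T = Sf := sm_tr _ _.
have qSf : forall x, 0 <= dot x (Sf *m x) by move=> x; exact: sm_ge0.
have qSg : forall x, 0 <= dot x (Sg *m x) by move=> x; exact: sm_ge0.
have hE : forall x y, dot x (E0 *m y) ^+ 2 <= e2 * dot x (Sf *m x) * dot y (Sg *m y).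
  move=> x y; apply: le_trans (E0bound x y DW10 DV10) _.
  by rewrite -!mulrA ler_wpM2r // mulr_ge0.
have Bb := Bbound sf0 sg0 e0 hse Sfs Su hSf hSg hE.
have Bu : (Sg - invmx Sf *m E0) \in unitmx.
  apply: inj_unit => x Bx0; have [h _] := Bb x; rewrite Bx0 dot0r mulr0 in h.
  apply: dot_eq0; apply/le_anti; rewrite dot_ge0 andbT.
  by rewrite -(pmulr_rle0 _ (exprn_gt0 2 sg0)).
have NuB : forall DW : W -> R, (forall w, 0 <= DW w) ->
    \sum_w \sum_v DW w * DV1 v * hs w v ^+ 2 <= m ->
    sg * \sum_w DW w * dot (fs w) (fs w) <= m.
  move=> DW D0 hM; apply: le_trans hM; rewrite mulr_sumr; apply: ler_sum => w _.
  have -> : \sum_v DW w * DV1 v * hs w v ^+ 2 = DW w * dot (fs w) (Sg *m fs w).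
    by rewrite /Sg sm_qf mulr_sumr; apply: eq_bigr => v _; rewrite /hs dotC; ring.
  by rewrite mulrCA ler_wpM2l.
have NzB : forall DV : V -> R, (forall v, 0 <= DV v) ->
    \sum_w \sum_v DW1 w * DV v * hs w v ^+ 2 <= m ->
    sf * \sum_v DV v * dot (gs v) (gs v) <= m.
  move=> DV D0 hM; apply: le_trans hM; rewrite exchange_big mulr_sumr; apply: ler_sum => v _.
  have -> : \sum_w DW1 w * DV v * hs w v ^+ 2 = DV v * dot (gs v) (Sf *m gs v).
    by rewrite /Sf sm_qf mulr_sumr; apply: eq_bigr => w _; rewrite /hs dotC; ring.
  by rewrite mulrCA ler_wpM2l.
set U1 := \sum_w DW1 w * dot (fs w) (fs w).
set X := \sum_w DW2 w * dot (fs w) (fs w).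
set Z1 := \sum_v DV1 v * dot (gs v) (gs v).
set Z := \sum_v DV2 v * dot (gs v) (gs v).
set An := \sum_w DW2 w * dot (a w) (a w).
set Cn := \sum_v DV2 v * dot (c v) (c v).
have hU1 := NuB _ DW10 M11; have hX := NuB _ DW20 M21.
have hZ1 := NzB _ DV10 M11; have hZ := NzB _ DV20 M12.
have U10 : 0 <= U1 by apply: sumr_ge0 => w _; rewrite mulr_ge0 ?dot_ge0.
have X0 : 0 <= X by apply: sumr_ge0 => w _; rewrite mulr_ge0 ?dot_ge0.
have Z10 : 0 <= Z1 by apply: sumr_ge0 => w _; rewrite mulr_ge0 ?dot_ge0.
have Z0 : 0 <= Z by apply: sumr_ge0 => w _; rewrite mulr_ge0 ?dot_ge0.
have An0 : 0 <= An by apply: sumr_ge0 => w _; rewrite mulr_ge0 ?dot_ge0.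
have Cn0 : 0 <= Cn by apply: sumr_ge0 => w _; rewrite mulr_ge0 ?dot_ge0.
have hAn : An <= e2 * Z1.
  apply: (@mid _ (\sum_w DW2 w * ((\sum_v DV1 v * del w v ^+ 2) * Z1))).
    apply: ler_sum => w _; rewrite ler_wpM2l //; exact: vCS.
  have : (\sum_w \sum_v DW2 w * DV1 v * del w v ^+ 2) * Z1 <= e2 * Z1 by rewrite ler_wpM2r.
  move=> HH; apply: (chain _ HH) => //; rewrite mulr_suml; apply: eq_bigr => w _.
  by rewrite mulrA mulr_sumr; congr (_ * _); apply: eq_bigr => v _; ring.
have hCn : Cn <= e2 * U1.
  apply: (@mid _ (\sum_v DV2 v * ((\sum_w DW1 w * del w v ^+ 2) * U1))).
    apply: ler_sum => v _; rewrite ler_wpM2l //; exact: vCS.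
  have : (\sum_w \sum_v DW1 w * DV2 v * del w v ^+ 2) * U1 <= e2 * U1 by rewrite ler_wpM2r.
  move=> HH; apply: (chain _ HH) => //; rewrite exchange_big mulr_suml; apply: eq_bigr => v _.
  by rewrite mulrA mulr_sumr; congr (_ * _); apply: eq_bigr => w _; ring.
have fin := final_arith sf0 sg0 e0 hse m0 X0 U10 An0 Cn0 Z0 Z10 hX hU1 hZ hZ1 hCn hAn.
apply: le_trans fin.
set Yv := fun v => 3/2 * sf ^+ 2 * dot (gs v) (gs v) + 3 * dot (c v) (c v).
have PW : forall w v, del w v ^+ 2 * (sf ^+ 3 * sg ^+ 2) <=
   (3 * sf * sg ^+ 2) * dot (fs w) (fs w) * dot (c v) (c v)
   + (12 * e2 * sg) * dot (fs w) (fs w) * Yv v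
   + (12 * sf) * dot (a w) (a w) * Yv v.
  move=> w v.
  set d := invmx Sf *m c v.
  set y := invmx (Sg - invmx Sf *m E0) *m (gs v - d).
  have hdec := decomp v w Su Bu.
  have By : (Sg - invmx Sf *m E0) *m y = gs v - d by rewrite /y mulKVmx.
  have [hy he] := Bb y; rewrite By in hy he.
  have [_ hd] := inv_bound (c v) sf0 Su hSf.
  have hy' := sub_bound (gs v) d.
  have := pw sf0 sg0 e0 (dot_ge0 (fs w)) (dot_ge0 d) (dot_ge0 (invmx Sf *m E0 *m y))
    (dot_ge0 y) (dot_ge0 (a w)) (dot_ge0 (gs v - d)) (dot_ge0 (gs v)) (dot_ge0 (c v))
    hdec (CS _ _) (CS _ _) (CS _ _) hd he hy hy'.
  by move=> HH; apply: le_trans HH _; apply: eqle_; rewrite /Yv; ring.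
apply: (@mid _ (\sum_w \sum_v DW2 w * DV2 v *
   ((3 * sf * sg ^+ 2) * dot (fs w) (fs w) * dot (c v) (c v)
   + (12 * e2 * sg) * dot (fs w) (fs w) * Yv v
   + (12 * sf) * dot (a w) (a w) * Yv v))).
  rewrite mulr_suml; apply: ler_sum => w _; rewrite mulr_suml; apply: ler_sum => v _.
  by rewrite -mulrA ler_wpM2l ?mulr_ge0.
rewrite sum_sep3; apply: eqle_.
have -> : \sum_v DV2 v * Yv v = 3/2 * sf ^+ 2 * Z + 3 * Cn.
  rewrite /Yv /Z /Cn !mulr_sumr -big_split /=; apply: eq_bigr => v _; rewrite /=; ring.
rewrite -/X -/Cn -/An; ring.
Qed.
End Main.

Section Sig.
Local Open Scope classical_set_scope.
Variable R : realType.
Variable p : nat.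

Lemma cont_sum_seq (I : Type) (F : I -> 'rV[R]_p -> R) (s : seq I) :
  (forall i, continuous (F i)) -> continuous (fun r => \sum_(i <- s) F i r).
Proof.
move=> Fc; elim: s => [|i s IH].
  have -> : (fun r : 'rV[R]_p => \sum_(i <- [::]) F i r) = (fun=> 0).
    by apply: funext => r; rewrite big_nil.
  exact: cst_continuous.
have -> : (fun r => \sum_(j <- i :: s) F j r) = (F i + fun r => \sum_(j <- s) F j r).
  by apply: funext => r; rewrite big_cons.
by move=> x; apply: continuousD; [apply: Fc | apply: IH].
Qed.

Lemma cont_sum (I : finType) (F : I -> 'rV[R]_p -> R) :
  (forall i, continuous (F i)) -> continuous (fun r => \sum_i F i r).
Proof. exact: cont_sum_seq. Qed.

Lemma cont_qf (A : 'M[R]_p) : continuous (fun r : 'rV[R]_p => dot r^T (A *m r^T)).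
Proof.
have -> : (fun r : 'rV[R]_p => dot r^T (A *m r^T)) =
   (fun r => \sum_k \sum_j r ord0 k * A k j * r ord0 j).
  apply: funext => r; rewrite dotE; apply: eq_bigr => k _; rewrite !mxE mulr_sumr.
  by apply: eq_bigr => j _; rewrite !mxE mulrA.
apply: cont_sum => k; apply: cont_sum => j.
move=> x.
apply: (@continuousM _ _ (fun r : 'rV[R]_p => r ord0 k * A k j) (fun r : 'rV[R]_p => r ord0 j)); last exact: coord_continuous.
apply: (@continuousM _ _ (fun r : 'rV[R]_p => r ord0 k) (fun r : 'rV[R]_p => A k j)); first exact: coord_continuous.
exact: cst_continuous.
Qed.
Lemma cont_nrm : continuous (fun r : 'rV[R]_p => dot r^T r^T).
Proof.
have -> : (fun r : 'rV[R]_p => dot r^T r^T) = (fun r => dot r^T (1%:M *m r^T)).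
  by apply: funext => r; rewrite mul1mx.
exact: cont_qf.
Qed.

Lemma sigma_bound (T : finType) (D : T -> R) (f : T -> 'cV[R]_p) :
  (forall t, 0 <= D t) ->
  0 <= sigma_last (second_moment D f) /\
  forall x, sigma_last (second_moment D f) * dot x x <= dot x (second_moment D f *m x).
Proof.
move=> D0; set A := second_moment D f.
have Asym : A^T = A := sm_tr D f.
have A0 : forall x, 0 <= dot x (A *m x) by move=> x; exact: sm_ge0.
rewrite /sigma_last; set SV := singular_values A.
have lbSV : forall y, SV y -> 0 <= y by move=> y [].
have hlb : has_lbound SV by exists 0 => y /lbSV.
have key : forall x, dot x x != 0 -> exists2 mm, SV mm & mm * dot x x <= dot x (A *m x).
  move=> x xn0.
  set S := [set r : 'rV[R]_p | dot r^T r^T = 1].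
  set phi := fun r : 'rV[R]_p => dot r^T (A *m r^T).
  have norm1 : forall y, dot y y != 0 ->
      S (((Num.sqrt (dot y y))^-1) *: y)^T /\
      phi (((Num.sqrt (dot y y))^-1) *: y)^T = (dot y y)^-1 * dot y (A *m y).
    move=> y yn0; have y0 : 0 < dot y y by rewrite lt0r yn0 dot_ge0.
    set k := Num.sqrt (dot y y).
    have k0 : 0 < k by rewrite sqrtr_gt0.
    have kk : k * k = dot y y by rewrite -expr2 sqr_sqrtr // ltW.
    rewrite /S /phi /= trmxK -scalemxAr !dotZl !dotZr; split.
      by rewrite mulrA -invfM kk mulVf.
    by rewrite mulrA -invfM kk.
  have [Sr1 _] := norm1 x xn0.
  have cS : compact S.
    apply: bounded_closed_compact.
    - exists 1; split => // M M1 r Sr /=.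
      rewrite /Num.Def.normr /= mx_normrE. apply: bigmax_le; first by rewrite ltW // (lt_trans ltr01).
      move=> [i j] _ /=; rewrite (ord1 i); apply: (@le_trans _ _ 1); last exact: ltW.
      have : r ord0 j ^+ 2 <= 1.
        rewrite -Sr dotE (bigD1 j) //= !mxE -expr2 lerDl; apply: sumr_ge0 => k _.
        by rewrite !mxE -expr2 sqr_ge0.
      by have [x0|x0] := lerP 0 (r ord0 j); [rewrite ger0_norm | rewrite ltr0_norm]; nra.
    - apply: (@preimage_closed _ _ (fun r : 'rV[R]_p => dot r^T r^T) [set y : R | y = 1]); last exact: (@closed_eq _ 1).
      by move=> r _; exact: cont_nrm.
  have [r0 Sr0 hmin] := @EVT_min_rV R p phi S (ex_intro _ _ Sr1) cS
     (@continuous_subspaceT _ _ S phi (@cont_qf A)).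
  move: Sr0; rewrite inE => Sr0.
  set mm := phi r0; set u := r0^T.
  have hu : dot u u = 1 := Sr0.
  have hm : forall y, mm * dot y y <= dot y (A *m y).
    move=> y; have [y0|yn0] := eqVneq (dot y y) 0; first by rewrite y0 mulr0.
    have [Sy Py] := norm1 y yn0.
    have := hmin _ (mem_set Sy); rewrite Py -/mm => h.
    have yp : 0 < dot y y by rewrite lt0r yn0 dot_ge0.
    by rewrite -ler_pdivlMr // mulrC.
  set B := A - mm%:M.
  have Bsym : B^T = B by rewrite /B linearB /= Asym tr_scalar_mx.
  have qB : forall y, dot y (B *m y) = dot y (A *m y) - mm * dot y y.
    by move=> y; rewrite /B mulmxBl dotBr mul_scalar_mx dotZr.
  have qB0 : forall y, 0 <= dot y (B *m y) by move=> y; rewrite qB subr_ge0.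
  have qBu : dot u (B *m u) = 0 by rewrite qB hu mulr1 /mm /phi -/u subrr.
  set z := B *m u.
  have Bz0 : z = 0.
    apply: dot_eq0; set N := dot z z; set q := dot z (B *m z).
    have N0 : 0 <= N := dot_ge0 z; have q0 : 0 <= q := qB0 z.
    have expand : forall t, dot (u + t *: z) (B *m (u + t *: z)) = 2 * t * N + t ^+ 2 * q.
      move=> t; rewrite mulmxDr -scalemxAr !dotDl !dotDr !dotZl !dotZr qBu.
      have -> : dot u (B *m z) = N by rewrite dot_mulmx Bsym.
      rewrite -/z -/q -/N; ring.
    set t := - N / (q + 1).
    have q1 : q + 1 != 0 by rewrite gt_eqF // ltr_pwDr.
    have ht := qB0 (u + t *: z); rewrite expand in ht.
    have e : (q + 1) ^+ 2 * (2 * t * N + t ^+ 2 * q) = - (N ^+ 2 * (q + 2)).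
      by rewrite /t; field.
    have : (q + 1) ^+ 2 * (2 * t * N + t ^+ 2 * q) >= 0 by rewrite mulr_ge0 ?sqr_ge0.
    rewrite e oppr_ge0 => h.
    have : N ^+ 2 * (q + 2) = 0 by apply/le_anti; rewrite h mulr_ge0 ?sqr_ge0 // addr_ge0.
    move/eqP; rewrite mulf_eq0 sqrf_eq0 => /orP [/eqP //|].
    by rewrite gt_eqF // ltr_pwDr.
  have Au : A *m u = mm *: u.
    by apply/eqP; rewrite -subr_eq0 -mul_scalar_mx -mulmxBl -/B -/z Bz0.
  have rA : r0 *m A = mm *: r0.
    by apply: trmx_inj; rewrite trmx_mul Asym -/u Au linearZ.
  have r0n0 : r0 != 0.
    by apply/eqP => r00; move: hu; rewrite /u r00 trmx0 dot0r => /eqP; rewrite eq_sym oner_eq0.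
  exists mm => //; split; first by rewrite /mm /phi; exact: A0.
  rewrite -eigenvalue_root_char; apply/eigenvalueP; exists r0 => //.
  by rewrite Asym mulmxA rA -scalemxAl rA scalerA expr2.
split.
- have [[y Sy]|ne] := pselect (SV !=set0).
    by apply: lb_le_inf; [exists y | move=> z /lbSV].
  have -> : SV = set0 by apply/seteqP; split => // y Sy; exfalso; apply: ne; exists y.
  by rewrite inf0.
- move=> x; have [x0|xn0] := eqVneq (dot x x) 0; first by rewrite x0 mulr0.
  have [mm Smm hmm] := key x xn0; apply: le_trans hmm.
  by rewrite ler_wpM2r ?dot_ge0 //; exact: (ge_inf hlb Smm).
Qed.
End Sig.

Lemma bilin_dot (R : realType) (W V : finType) (p : nat) (f : W -> 'cV[R]_p) (g : V -> 'cV[R]_p) :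
  bilin f g = fun w v => dot (f w) (g v).
Proof. by apply: funext => w; apply: funext => v; rewrite dotE. Qed.

Lemma sq_lt (R : realType) (e s : R) : 0 <= e -> e < s / 2 -> 4 * e ^+ 2 <= s ^+ 2.
Proof. move=> e0 h; nra. Qed.

Lemma c5764 (R : realType) : (57 : R) <= 64. Proof. lra. Qed.

Lemma final_step (R : realType) (r sf sg eps M : R) : 0 < sf -> 0 < sg ->
  r * (sf ^+ 3 * sg ^+ 2) <= 57 * eps ^+ 2 * (M ^+ 2) ^+ 2 * sf ->
  r <= 64 * eps ^+ 2 * (M ^+ 4 / Num.sqrt (sf * sg) ^+ 4).
Proof.
move=> sfp sgp H.
have hs4 : Num.sqrt (sf * sg) ^+ 4 = (sf * sg) ^+ 2.
  by rewrite (_ : 4%N = (2 * 2)%N) // exprM sqr_sqrtr // ltW ?mulr_gt0.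
have hM4 : M ^+ 4 = (M ^+ 2) ^+ 2 by rewrite -exprM.
have ss : 0 < (sf * sg) ^+ 2 by rewrite exprn_gt0 // mulr_gt0.
rewrite hs4 hM4 mulrA ler_pdivlMr //.
set e2 := eps ^+ 2 in H *; set m := M ^+ 2 in H *.
have e20 : 0 <= e2 := sqr_ge0 eps.
have H2 : r * (sf * sg) ^+ 2 <= 57 * e2 * m ^+ 2.
  rewrite -(ler_pM2r sfp); apply: le_trans H; apply: eqle_; ring.
apply: le_trans H2 _; clear H; have := sqr_ge0 m; have := c5764 R; nra.
Qed.

Theorem mainTheorem5 (R : realType) (W V : finType) (p : nat)
  (fstar fhat : W -> 'cV[R]_p) (gstar ghat : V -> 'cV[R]_p)
  (DW1 DW2 : W -> R) (DV1 DV2 : V -> R) (eps Mstar : R) :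
  is_distr DW1 -> is_distr DW2 -> is_distr DV1 -> is_distr DV2 ->
  0 <= eps ->
  (* (i,j) in {(1,1), (1,2), (2,1)} *)
  risk DW1 DV1 (bilin fstar gstar) (bilin fhat ghat) <= eps ^+ 2 ->
  risk DW1 DV2 (bilin fstar gstar) (bilin fhat ghat) <= eps ^+ 2 ->
  risk DW2 DV1 (bilin fstar gstar) (bilin fhat ghat) <= eps ^+ 2 ->
  expect_prod DW1 DV1 (fun w v => bilin fstar gstar w v ^+ 2) <= Mstar ^+ 2 ->
  expect_prod DW1 DV2 (fun w v => bilin fstar gstar w v ^+ 2) <= Mstar ^+ 2 ->
  expect_prod DW2 DV1 (fun w v => bilin fstar gstar w v ^+ 2) <= Mstar ^+ 2 ->
  let sigma_star_sq := sigma_last (second_moment DW1 fstar) *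
                       sigma_last (second_moment DV1 gstar) in
  0 < sigma_star_sq ->
  let sigma_star := Num.sqrt sigma_star_sq in
  eps < sigma_star / 2 ->
  risk DW2 DV2 (bilin fstar gstar) (bilin fhat ghat)
    <= 64 * eps ^+ 2 * (Mstar ^+ 4 / sigma_star ^+ 4).
Proof.
move=> [DW10 _] [DW20 _] [DV10 _] [DV20 _] eps0 r11 r12 r21 M11 M12 M21 s2 s2pos s eps_lt.
have [sf0 hSf] := sigma_bound fstar DW10.
have [sg0 hSg] := sigma_bound gstar DV10.
move: s2pos eps_lt; rewrite /s /s2.
set sf := sigma_last (second_moment DW1 fstar).
set sg := sigma_last (second_moment DV1 gstar) => s2pos eps_lt.
have sfp : 0 < sf.
  rewrite lt0r sf0 andbT; apply/eqP => h; move: s2pos; by rewrite h mul0r ltxx.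
have sgp : 0 < sg.
  rewrite lt0r sg0 andbT; apply/eqP => h; move: s2pos; by rewrite h mulr0 ltxx.
have e2b : 4 * eps ^+ 2 <= sf * sg.
  have hs2 : Num.sqrt (sf * sg) ^+ 2 = sf * sg by rewrite sqr_sqrtr // ltW.
  have hs0 : 0 <= Num.sqrt (sf * sg) := sqrtr_ge0 _.
  rewrite -hs2; exact: sq_lt.
rewrite !bilin_dot /risk /expect_prod in r11 r12 r21 M11 M12 M21 *.
have H := main_core DW10 DW20 DV10 DV20 sfp sgp (sqr_ge0 eps) e2b (sqr_ge0 Mstar)
   hSf hSg r11 r12 r21 M11 M12 M21.
apply: (@final_step R _ sf sg eps Mstar sfp sgp); exact: H.
Qed.
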